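(* Consider the finite game with players $\mathcal{M}=\{1,\dots,M\}$, common action set $\mathcal{N}$ and costs $c_i(\mathbf{a}) = \frac{\sigma^2}{h_{ia_i}}\,\frac{\beta_i}{[1-\sum_{l\in\mathcal{M}_{a_i}(\mathbf{a})}\beta_l]^+}$. If this game contains no best response cycles, then the algorithm MAPC$^\ast$, started from any initial association profile, converges in a finite number of steps (i.e., after finitely many steps the association profile no longer changes).
   Context: Uplink cellular model: mobiles $\mathcal{M}=\{1,\dots,M\}$, BSs $\mathcal{N}=\{1,\dots,N\}$, power gains $h_{ij}>0$, noise power $\sigma^2>0$, target SINRs $\gamma_i>0$, $\beta_i=\gamma_i/(1+\gamma_i)$. Association profile $\mathbf{a}\in\mathcal{N}^M$, $\mathcal{M}_j(\mathbf{a})=\{l: a_l=j\}$, $[x]^+=\max(x,0)$, positive$/0=+\infty$; $(b,\mathbf{a}_{-i})$ replaces $a_i$ by $b$. A best response path is a sequence of profiles $\mathbf{a}^1,\dots,\mathbf{a}^k$ where each $\mathbf{a}^{r+1}=(b,\mathbf{a}^r_{-i})$ for some player $i$ and some $b\in\arg\min_{b'\in\mathcal{N}}c_i(b',\mathbf{a}^r_{-i})$; a best response cycle is such a path with $\mathbf{a}^1=\mathbf{a}^k$ in which, for at least one step, the deviating player strictly decreases its cost. Algorithm MAPC$^\ast$: at times $t=0,1,2,\dots$, mobile $i=1+(t\bmod M)$ changes its association at $t+1$ iff $a_i(t)\notin\arg\min_{j\in\mathcal{N}}\big(c_i(j,\mathbf{a}(t)_{-i}),\ \sum_{l\in\mathcal{M}_j((j,\mathbf{a}(t)_{-i}))}\beta_l\big)$,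 the minimization being with respect to lexicographic order on pairs; in that case $a_i(t+1)$ is chosen in this lexicographic argmin and all other associations are unchanged. *)

(* Defs.v *)
From HB Require Import structures.
From mathcomp Require Import all_boot all_order all_algebra.
From mathcomp Require Import constructive_ereal.
Set Implicit Arguments. Unset Strict Implicit. Unset Printing Implicit Defensive.
Import Order.TTheory GRing.Theory Num.Theory.
Local Open Scope ring_scope.

(* Players are 'I_M (player i+1 of the paper is ordinal i), base stations 'I_N. *)
Definition profile (M N : nat) := 'I_M -> 'I_N.

Definition upd M N (a : profile M N) (i : 'I_M) (b : 'I_N) : profile M N :=
  fun l => if l == i then b else a l.

Section Game.
Variables (R : realFieldType) (M N : nat).
Variables (h : 'I_M -> 'I_N -> R) (sigma2 : R) (gamma : 'I_M -> R).

Definition beta (i : 'I_M) : R := gamma i / (1 + gamma i).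

Definition load (a : profile M N) (j : 'I_N) : R :=
  \sum_(l < M | a l == j) beta l.

Definition cost (i : 'I_M) (a : profile M N) : \bar R :=
  let d := Num.max (1 - load a (a i)) 0 in
  if 0 < d then ((sigma2 / h i (a i)) * beta i / d)%:E else +oo%E.

Definition best_response (i : 'I_M) (a : profile M N) (b : 'I_N) : Prop :=
  forall b' : 'I_N, (cost i (upd a i b) <= cost i (upd a i b'))%E.

Definition br_step (i : 'I_M) (a a' : profile M N) : Prop :=
  exists2 b, best_response i a b & a' = upd a i b.

(* best response cycle a^1,...,a^k = P 0, ..., P n (n = k-1), P 0 = P n,
   with a strict cost decrease for the deviating player at some step *)
Definition has_br_cycle : Prop :=
  exists (n : nat) (P : nat -> profile M N) (I : nat -> 'I_M),
    [/\ P 0%N = P n,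
        (forall r, (r < n)%N -> br_step (I r) (P r) (P r.+1)) &
        exists2 r, (r < n)%N & (cost (I r) (P r.+1) < cost (I r) (P r))%E].

Definition lex_le (x y : \bar R * R) : bool :=
  (x.1 < y.1)%E || ((x.1 == y.1) && (x.2 <= y.2)).

Definition mapc_key (i : 'I_M) (a : profile M N) (j : 'I_N) : \bar R * R :=
  (cost i (upd a i j), load (upd a i j) j).

Definition in_lex_argmin (i : 'I_M) (a : profile M N) (j : 'I_N) : bool :=
  [forall j' : 'I_N, lex_le (mapc_key i a j) (mapc_key i a j')].

(* a : nat -> profile is a run of MAPC*: at time t the player with index
   t mod M (paper: 1 + (t mod M)) updates. *)
Definition mapc_run (a : nat -> profile M N) : Prop :=
  forall (t : nat) (i : 'I_M), nat_of_ord i = (t %% M)%N ->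
    if in_lex_argmin i (a t) (a t i) then a t.+1 = a t
    else exists2 b, in_lex_argmin i (a t) b & a t.+1 = upd (a t) i b.

End Game.

(* Main.v *)
Require Import Defs.
From mathcomp Require Import all_boot all_order all_algebra.
From mathcomp Require Import constructive_ereal.
From mathcomp Require Import ring lra.
From Stdlib Require Import Classical FunctionalExtensionality ClassicalEpsilon.
Import Order.TTheory GRing.Theory Num.Theory.
Local Open Scope ring_scope.
Set Implicit Arguments. Unset Strict Implicit.

Section Aux.
Variables (R : realFieldType) (M N : nat) (gamma : 'I_M -> R).

Lemma upd_id (a : profile M N) i : upd a i (a i) = a.
Proof. apply: functional_extensionality => l; rewrite /upd; by case: eqP => [->|]. Qed.

Lemma upd_i (a : profile M N) i b : upd a i b i = b.
Proof. by rewrite /upd eqxx. Qed.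

Definition rest (a : profile M N) i j :=
  \sum_(l < M | l != i) (if a l == j then beta gamma l else 0).

Lemma load_split a i j :
  load gamma a j = (if a i == j then beta gamma i else 0) + rest a i j.
Proof. by rewrite /load big_mkcond (bigD1 i) //=. Qed.

Lemma rest_upd a i b j : rest (upd a i b) i j = rest a i j.
Proof. by apply: eq_bigr => l /negbTE; rewrite /upd => ->. Qed.

Definition pot (a : profile M N) := \sum_(j < N) load gamma a j ^+ 2.

Lemma pot_lt a i b : 0 < beta gamma i ->
  load gamma (upd a i b) b < load gamma a (a i) -> pot (upd a i b) < pot a.
Proof.
move=> bpos Hl.
set c := a i.
have bc : b != c.
  by apply/eqP => e; move: Hl; rewrite e /c upd_id ltxx.
have split a' : pot a' = load gamma a' c ^+ 2 + (load gamma a' b ^+ 2 +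
   \sum_(j < N | (j != c) && (j != b)) load gamma a' j ^+ 2).
  by rewrite /pot (bigD1 c) //= (bigD1 b) //=.
rewrite !split.
have -> : \sum_(j < N | (j != c) && (j != b)) load gamma (upd a i b) j ^+ 2 =
          \sum_(j < N | (j != c) && (j != b)) load gamma a j ^+ 2.
  apply: eq_bigr => j /andP[jc jb].
  rewrite !(load_split _ i) upd_i rest_upd -/c.
  by rewrite eq_sym (negbTE jb) eq_sym (negbTE jc).
move: Hl; rewrite !(load_split _ i) !upd_i !rest_upd -/c !eqxx (negbTE bc) eq_sym (negbTE bc).
move: (rest a i b) (rest a i c) (beta gamma i) bpos => y x be hb Hl.
rewrite !add0r in Hl *.
nra.
Qed.

Lemma lex_strict (x y z : \bar R * R) :
  lex_le x z -> ~~ lex_le y z -> (x.1 <= y.1)%E /\ (x.1 = y.1 -> x.2 < y.2).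
Proof.
case: x y z => [x1 x2] [y1 y2] [z1 z2]; rewrite /lex_le /=.
rewrite negb_or negb_and -leNgt -ltNge => Hx /andP[zy /orP[ne|lt]].
- have zy' : (z1 < y1)%E by rewrite lt_neqAle eq_sym ne.
  have xy : (x1 < y1)%E.
    case/orP: Hx => [xz|/andP[/eqP -> _]] //; exact: lt_trans xz zy'.
  by split; [exact: ltW | move=> e; move: xy; rewrite e ltxx].
- case/orP: Hx => [xz|/andP[/eqP e xz]].
    have xy : (x1 < y1)%E by exact: lt_le_trans xz zy.
    by split; [exact: ltW | move=> e; move: xy; rewrite e ltxx].
  split; first by rewrite e.
  by move=> _; exact: le_lt_trans xz lt.
Qed.

End Aux.

Lemma argmin_br (R : realFieldType) (M N : nat) (h : 'I_M -> 'I_N -> R) sigma2 gamma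
  i (a : profile M N) b :
  in_lex_argmin h sigma2 gamma i a b -> best_response h sigma2 gamma i a b.
Proof.
move=> /forallP H b'; have := H b'; rewrite /lex_le /mapc_key /=.
by case/orP => [/ltW|/andP[/eqP -> _]].
Qed.

Theorem proposition3 (R : realFieldType) (M N : nat)
    (h : 'I_M -> 'I_N -> R) (sigma2 : R) (gamma : 'I_M -> R) :
  (forall i j, 0 < h i j) -> 0 < sigma2 -> (forall i, 0 < gamma i) ->
  ~ has_br_cycle h sigma2 gamma ->
  forall a : nat -> profile M N, mapc_run h sigma2 gamma a ->
  exists T : nat, forall t : nat, (T <= t)%N -> a t = a T.
Proof.
move=> hpos spos gpos nocyc a run.
have bpos : forall i, 0 < beta gamma i.
  by move=> i; rewrite /beta divr_gt0 // addr_gt0.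
case: (posnP M) => [M0 | HM].
  exists 0%N => t _; apply: functional_extensionality => i.
  by move: (ltn_ord i); rewrite {2}M0.
pose I t := Ordinal (ltn_pmod t HM).
have step : forall t, [/\ br_step h sigma2 gamma (I t) (a t) (a t.+1),
    (cost h sigma2 gamma (I t) (a t.+1) <= cost h sigma2 gamma (I t) (a t))%E &
    (cost h sigma2 gamma (I t) (a t.+1) = cost h sigma2 gamma (I t) (a t) ->
     a t.+1 <> a t -> pot gamma (a t.+1) < pot gamma (a t))].
  move=> t; have := run t (I t) erefl.
  case: ifP => [Hin -> | /negbT Hn [b Hb ->]].
    split => //; exists (a t (I t)); first exact: argmin_br.
    exact: (esym (upd_id (a t) (I t))).
  move/forallPn: Hn => [j' Hj'].
  have := lex_strict ((forallP Hb) j') Hj'.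
  have u := upd_id (a t) (I t). rewrite /mapc_key /= u => -[cle ceq].
  split => //; first by exists b => //; exact: argmin_br.
  move=> e _; apply: pot_lt => //.
  exact: ceq e.
case: (classic (exists T, forall s, (T <= s)%N -> a s.+1 = a s)) => [[T HT] | Hinf].
  exists T => t Tt.
  have E : forall k, a (T + k)%N = a T.
    by elim=> [|k IH]; rewrite ?addn0 // addnS HT ?leq_addr.
  by rewrite -(subnKC Tt) E.
have Hch : forall T, exists s, (T <= s)%N /\ a s.+1 <> a s.
  move=> T; apply: NNPP => H; apply: Hinf; exists T => s Ts.
  by apply: NNPP => ne; apply: H; exists s.
pose g T := proj1_sig (constructive_indefinite_description _ (Hch T)).
have Hg : forall T, (T <= g T)%N /\ a (g T).+1 <> a (g T).
  by move=> T; rewrite /g; case: constructive_indefinite_description.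
have cyc : forall t1 t2, (t1 < t2)%N -> a t1 = a t2 -> a t1.+1 <> a t1 -> False.
  move=> t1 t2 lt12 e12 ch; apply: nocyc.
  exists (t2 - t1)%N, (fun r => a (t1 + r)%N), (fun r => I (t1 + r)%N).
  split.
  - by rewrite addn0 (subnKC (ltnW lt12)).
  - by move=> r _; rewrite addnS; case: (step (t1 + r)%N).
  apply: NNPP => H.
  have eqc : forall r, (r < t2 - t1)%N ->
      cost h sigma2 gamma (I (t1 + r)%N) (a (t1 + r).+1) =
      cost h sigma2 gamma (I (t1 + r)%N) (a (t1 + r)%N).
    move=> r rn; case: (step (t1 + r)%N) => _ cle _.
    move: cle; rewrite le_eqVlt => /orP[/eqP // | clt].
    by exfalso; apply: H; exists r => //; rewrite addnS.
  have noninc : forall r, (r < t2 - t1)%N ->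
      pot gamma (a (t1 + r).+1) <= pot gamma (a (t1 + r)%N).
    move=> r rn; case: (classic (a (t1 + r).+1 = a (t1 + r)%N)) => [-> //|ne].
    by apply: ltW; case: (step (t1 + r)%N) => _ _; apply => //; apply: eqc.
  have first : pot gamma (a t1.+1) < pot gamma (a t1).
    have := eqc 0%N; rewrite addn0 subn_gt0 => /(_ lt12) e.
    by case: (step t1) => _ _; apply.
  have mono : forall k, (k < t2 - t1)%N -> pot gamma (a (t1 + k.+1)%N) <= pot gamma (a t1.+1).
    elim=> [|k IH] kn; first by rewrite addn1.
    apply: le_trans (IH (ltnW kn)); rewrite addnS; exact: noninc.
  have n0 : (0 < t2 - t1)%N by rewrite subn_gt0.
  have hlt : ((t2 - t1).-1 < t2 - t1)%N by rewrite prednK.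
  have := mono _ hlt.
  rewrite prednK // (subnKC (ltnW lt12)) -e12 => H2.
  by have := le_lt_trans H2 first; rewrite ltxx.
exfalso.
pose s := fun k => iter k (fun x => g x.+1) (g 0%N).
have sS : forall k, (s k < s k.+1)%N.
  by move=> k; rewrite /s iterS; case: (Hg (s k).+1).
have smono : forall p q, (p < q)%N -> (s p < s q)%N.
  move=> p; elim=> // q IH; rewrite ltnS leq_eqVlt => /orP[/eqP -> // | /IH hh].
  exact: ltn_trans hh (sS q).
have sch : forall k, a (s k).+1 <> a (s k).
  case=> [|k]; first exact: (Hg 0%N).2.
  by rewrite /s iterS; exact: (Hg _).2.
pose f := fun k : 'I_(#|{ffun 'I_M -> 'I_N}|.+1) => [ffun l => a (s k) l].
have [p [q [Hpq Hne]]] : exists p q, f p = f q /\ p <> q.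
  apply: NNPP => H.
  have inj : injective f.
    by move=> p q e; apply: NNPP => ne; apply: H; exists p, q.
  by have := @leq_card _ _ f inj; rewrite card_ord ltnn.
have eqa : a (s p) = a (s q).
  apply: functional_extensionality => l.
  by have := congr1 (fun F : {ffun 'I_M -> 'I_N} => F l) Hpq; rewrite !ffunE.
case: (ltngtP p q) => [lt|lt|e].
- exact: cyc (smono _ _ lt) eqa (sch p).
- exact: cyc (smono _ _ lt) (esym eqa) (sch q).
- by apply: Hne; apply: val_inj.
Qed.
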